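(* Let $U_1,U_2,V_1,V_2$ be four real random variables defined on a common probability space such that (1) $U_1$ and $U_2$ have the same distribution, and (2) for all $i,j\in\{1,2\}$, $U_i$ and $V_j$ are independent. If $U_1+V_1=U_2+V_2$ almost surely, then $U_1=U_2$ almost surely. *)

(* Defs.v *)
From HB Require Import structures.
From mathcomp Require Import all_boot all_order all_algebra.
From mathcomp Require Import all_classical all_reals all_analysis.
Set Implicit Arguments. Unset Strict Implicit. Unset Printing Implicit Defensive.
Import Order.TTheory GRing.Theory Num.Theory.
Local Open Scope classical_set_scope.
Local Open Scope ring_scope.

Definition same_distribution d (T : measurableType d) (R : realType)
  (P : probability T R) (X Y : {RV P >-> R}) : Prop :=
  forall A : set R, measurable A -> distribution P X A = distribution P Y A.

Definition indep_RV d (T : measurableType d) (R : realType)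
  (P : probability T R) (X Y : {RV P >-> R}) : Prop :=
  forall A B : set R, measurable A -> measurable B ->
    P (X @^-1` A `&` Y @^-1` B) = (P (X @^-1` A) * P (Y @^-1` B))%E.

(* Main.v *)
Require Import Defs.
From HB Require Import structures.
From mathcomp Require Import all_boot all_order all_algebra.
From mathcomp Require Import all_classical all_reals all_analysis.
From mathcomp Require Import lra.
Import Order.TTheory GRing.Theory Num.Theory.
Local Open Scope classical_set_scope.
Local Open Scope ring_scope.

Section Key.
Context (d : measure_display) (T : measurableType d) (R : realType)
  (P : probability T R) (U1 U2 V1 V2 : {RV P >-> R}).
Hypothesis hd : same_distribution U1 U2.
Hypothesis i11 : indep_RV U1 V1.
Hypothesis i12 : indep_RV U1 V2.
Hypothesis i21 : indep_RV U2 V1.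
Hypothesis i22 : indep_RV U2 V2.
Hypothesis hs : {ae P, forall x, U1 x + V1 x = U2 x + V2 x}.

Let p (S : set T) : R := fine (P S).
Let pE S : measurable S -> P S = (p S)%:E.
Proof. by move=> mS; rewrite /p fineK // fin_num_measure. Qed.
Let p0 S : 0 <= p S.
Proof. by rewrite /p fine_ge0. Qed.
Let pDI S F : measurable S -> measurable F -> p S = p (S `\` F) + p (S `&` F).
Proof.
move=> mS mF; rewrite /p (measureDI P mS mF) fineD //; apply: fin_num_measure.
  exact: measurableD.
exact: measurableI.
Qed.

Lemma key (s r : R) :
  P (U1 @^-1` [set y | y <= s] `&` V1 @^-1` [set y | r < y]
      `\` U2 @^-1` [set y | y <= s] `\` V2 @^-1` [set y | r < y]) = 0%E.
Proof.
set A := U1 @^-1` _; set B := U2 @^-1` _; set C := V1 @^-1` _; set E := V2 @^-1` _.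
have ms : measurable [set y : R | y <= s].
  have -> : [set y : R | y <= s] = [set` `]-oo, s]] by apply/seteqP; split => y /=; rewrite in_itv.
  exact: measurable_itv.
have mr : measurable [set y : R | r < y].
  have -> : [set y : R | r < y] = [set` `]r, +oo[] by apply/seteqP; split => y /=; rewrite in_itv /= andbT.
  exact: measurable_itv.
have mA : measurable A by exact: measurable_funPTI.
have mB : measurable B by exact: measurable_funPTI.
have mC : measurable C by exact: measurable_funPTI.
have mE : measurable E by exact: measurable_funPTI.
have hAC : p (A `&` C) = p A * p C by apply/EFin_inj; rewrite EFinM -!pE //; [exact: i11|exact: measurableI].
have hAE : p (A `&` E) = p A * p E by apply/EFin_inj; rewrite EFinM -!pE //; [exact: i12|exact: measurableI].
have hBC : p (B `&` C) = p B * p C by apply/EFin_inj; rewrite EFinM -!pE //; [exact: i21|exact: measurableI].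
have hBE : p (B `&` E) = p B * p E by apply/EFin_inj; rewrite EFinM -!pE //; [exact: i22|exact: measurableI].
have hAB : p A = p B by apply/EFin_inj; rewrite -!pE //; exact: hd.
have [N [mN PN sN]] := hs.
have bad1 : p (A `&` E `\` B `\` C) = 0.
  have mX : measurable (A `&` E `\` B `\` C).
    by apply: measurableD => //; apply: measurableD => //; apply: measurableI.
  apply/EFin_inj; rewrite -pE //; apply: (@subset_measure0 _ _ _ P _ N) => //.
  move=> x [[[Ax Ex] Bx] Cx]; apply: sN => /= h.
  move: Ax Ex Bx Cx; rewrite /A /B /C /E /= => Ax Ex /negP Bx /negP Cx.
  rewrite -ltNge in Bx; rewrite -leNgt in Cx; lra.
have bad2 : p (B `&` C `\` A `\` E) = 0.
  have mX : measurable (B `&` C `\` A `\` E).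
    by apply: measurableD => //; apply: measurableD => //; apply: measurableI.
  apply/EFin_inj; rewrite -pE //; apply: (@subset_measure0 _ _ _ P _ N) => //.
  move=> x [[[Bx Cx] Ax] Ex]; apply: sN => /= h.
  move: Ax Ex Bx Cx; rewrite /A /B /C /E /= => /negP Ax /negP Ex Bx Cx.
  rewrite -ltNge in Ax; rewrite -leNgt in Ex; lra.
have mAC : measurable (A `&` C) by exact: measurableI.
have mAE : measurable (A `&` E) by exact: measurableI.
have mBC : measurable (B `&` C) by exact: measurableI.
have mBE : measurable (B `&` E) by exact: measurableI.
have d1 := pDI _ _ mAC mB.
have d2 := pDI _ _ mBC mA.
have d3 := pDI _ _ mAE mB.
have d4 := pDI _ _ mBE mA.
have d5 := pDI _ _ (measurableD mAC mB) mE.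
have d6 := pDI _ _ (measurableD mAE mB) mC.
have d7 := pDI _ _ (measurableD mBC mA) mE.
have d8 := pDI _ _ (measurableD mBE mA) mC.
have e1 : A `&` C `&` B = B `&` C `&` A by apply/seteqP; split => x; rewrite /setI /setD /=; tauto.
have e2 : A `&` E `&` B = B `&` E `&` A by apply/seteqP; split => x; rewrite /setI /setD /=; tauto.
have e3 : (A `&` C `\` B) `&` E = (A `&` E `\` B) `&` C by apply/seteqP; split => x; rewrite /setI /setD /=; tauto.
have e4 : (B `&` C `\` A) `&` E = (B `&` E `\` A) `&` C by apply/seteqP; split => x; rewrite /setI /setD /=; tauto.
rewrite e1 in d1; rewrite e2 in d3; rewrite e3 in d5; rewrite e4 in d7.
rewrite -hAB in hBC hBE.
have h1 := p0 (A `&` C `\` B `\` E).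
have h2 := p0 (B `&` E `\` A `\` C).
rewrite pE; last by apply: measurableD => //; exact: measurableD.
congr (_%:E); lra.
Qed.
Definition XZ (s r : R) := U1 @^-1` [set y | y <= s] `&` V1 @^-1` [set y | r < y]
      `\` U2 @^-1` [set y | y <= s] `\` V2 @^-1` [set y | r < y].

Lemma mXZ s r : measurable (XZ s r).
Proof.
have ms : measurable [set y : R | y <= s].
  have -> : [set y : R | y <= s] = [set` `]-oo, s]] by apply/seteqP; split => y /=; rewrite in_itv.
  exact: measurable_itv.
have mr : measurable [set y : R | r < y].
  have -> : [set y : R | r < y] = [set` `]r, +oo[] by apply/seteqP; split => y /=; rewrite in_itv /= andbT.
  exact: measurable_itv.
apply: measurableD; [apply: measurableD; [apply: measurableI|]|]; exact: measurable_funPTI.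
Qed.

Lemma lt_null : {ae P, forall x, ~ (U1 x < U2 x)}.
Proof.
pose Q n x := match (unpickle n : option (rat * rat)) with
  | Some (q1, q2) => ~ XZ (ratr q1) (ratr q2) x | None => True end.
have H : forall n, \forall x \ae P, Q n x.
  move=> n; rewrite /Q; case: (unpickle n) => [[q1 q2]|].
    exists (XZ (ratr q1) (ratr q2)); split; [exact: mXZ|exact: key|].
    by move=> x /= /contrapT.
  by exists set0; split; [exact: measurable0|exact: measure0|move=> x /=].
have := ae_foralln H.
apply: filterS2 hs => x hsx hQ hlt.
have hv : V2 x < V1 x by lra.
have /rat_in_itvoo[q1] := hlt; rewrite in_itv /= => /andP[a1 a2].
have /rat_in_itvoo[q2] := hv; rewrite in_itv /= => /andP[b1 b2].
have := hQ (pickle (q1, q2)); rewrite /Q pickleK; apply.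
rewrite /XZ /=; split; [split; [split|]|].
- exact: ltW.
- exact: b2.
- by move/(lt_le_trans a2); rewrite ltxx.
- by move/(lt_trans b1); rewrite ltxx.
Qed.
End Key.

Theorem mainTheorem2 (d : measure_display) (T : measurableType d) (R : realType)
  (P : probability T R) (U1 U2 V1 V2 : {RV P >-> R}) :
  same_distribution U1 U2 ->
  indep_RV U1 V1 -> indep_RV U1 V2 -> indep_RV U2 V1 -> indep_RV U2 V2 ->
  {ae P, forall x, U1 x + V1 x = U2 x + V2 x} ->
  {ae P, forall x, U1 x = U2 x}.
Proof.
move=> hd i11 i12 i21 i22 hs.
have h1 := @lt_null d T R P U1 U2 V1 V2 hd i11 i12 i21 i22 hs.
have hd' : same_distribution U2 U1 by move=> A mA; rewrite hd.
have hs' : {ae P, forall x, U2 x + V2 x = U1 x + V1 x}.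
  by apply: filterS hs => x ->.
have h2 := @lt_null d T R P U2 U1 V2 V1 hd' i22 i21 i12 i11 hs'.
apply: filterS2 h1 h2 => x a b.
apply/eqP; rewrite eq_le; apply/andP; split; rewrite leNgt; apply/negP; by [].
Qed.
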